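(* Consider the stochastic energy exchange model and the notation of the context. For every sufficiently small $\eta>0$ there is a constant $C>0$ depending on $N$ and $\eta$ such that for every $\mathbf{E}\in\mathbb{R}^N_+$, $1\le n\le N$ and $1\le k\le N-n+1$, $$\mathbb{E}_{\mathbf{E}}\big[V_{n,k}(\mathbf{E}_{\tau_1^+})\mathbf{1}_{\mathcal{C}_k(\tau_1)}\big]\le\frac{C}{\mathcal{R}}\Big(\sum_{i=0}^{n-1}E_{k+i}\Big)^{a_n\eta-\frac12}$$ and $$\mathbb{E}_{\mathbf{E}}\big[V_{n,k}(\mathbf{E}_{\tau_1^+})\mathbf{1}_{\mathcal{C}_{k+n}(\tau_1)}\big]\le\frac{C}{\mathcal{R}}\Big(\sum_{i=0}^{n-1}E_{k+i}\Big)^{a_n\eta-\frac12}.$$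
   Context: Fix $N\ge1$, $T_L,T_R>0$, a sufficiently large $K$ ($K\gg T_L,T_R$) and $R(a,b)=\min\{K,\sqrt{\min(a,b)}\}$. Write $E_0:=T_L$, $E_{N+1}:=T_R$. The stochastic energy exchange model is the Markov jump process $\mathbf{E}_t=(E_1(t),\dots,E_N(t))$ on $\mathbb{R}^N_+$ with independent exponential clocks $i=1,\dots,N+1$, clock $i$ having rate $R_i=R(E_{i-1},E_i)$. When clock $i$ with $2\le i\le N$ rings, $(E_{i-1},E_i)\mapsto(p(E_{i-1}+E_i),(1-p)(E_{i-1}+E_i))$, $p$ uniform on $(0,1)$; when clock $1$ (resp. $N+1$) rings, $E_1\mapsto p(E_1+X_L)$ (resp. $E_N\mapsto p(E_N+X_R)$), $X_L,X_R$ exponential with means $T_L,T_R$; all randomness independent. Let $\tau_1$ be the time of the first clock ring, $\mathcal{C}_i(\tau_1)$ the event that the ring at $\tau_1$ is clock $i$, $\mathbf{E}_{\tau_1^+}$ the configuration immediately after that ring, $\mathcal{R}=\sum_{i=1}^{N+1}R_i$, and $\mathbb{E}_{\mathbf{E}}$ expectation with $\mathbf{E}_0=\mathbf{E}$. Let $a_m=1-\frac{2^{m-1}-1}{2^N-1}$ and $V_{n,k}(\mathbf{E})=\big(\sum_{j=0}^{n-1}E_{k+j}\big)^{a_n\eta-1}$. *)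

(* Defs.v *)
From HB Require Import structures.
From mathcomp Require Import all_boot all_order all_algebra.
From mathcomp Require Import all_classical all_reals all_analysis.
Set Implicit Arguments. Unset Strict Implicit. Unset Printing Implicit Defensive.
Import Order.TTheory GRing.Theory Num.Theory.
Local Open Scope ring_scope.

(* Configurations E = (E_1,...,E_N) are represented by functions nat -> R;
   only the values at 1..N matter. *)

Definition ext {R : realType} (N : nat) (TL TR : R) (E : nat -> R) (j : nat) : R :=
  if j == 0%N then TL else if j == N.+1 then TR else E j.

Definition rateR {R : realType} (K a b : R) : R :=
  Num.min K (Num.sqrt (Num.min a b)).

Definition clock_rate {R : realType} (N : nat) (TL TR K : R) (E : nat -> R)
  (i : nat) : R :=
  rateR K (ext N TL TR E i.-1) (ext N TL TR E i).

Definition total_rate {R : realType} (N : nat) (TL TR K : R) (E : nat -> R) : R :=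
  \sum_(1 <= i < N.+2) clock_rate N TL TR K E i.

(* Configuration right after clock i rings, with uniform p and
   (for the boundary clocks) the bath variable x = X_L (i = 1) or X_R (i = N+1). *)
Definition jump {R : realType} (N i : nat) (E : nat -> R) (p x : R) : nat -> R :=
  fun j =>
    if i == 1%N then (if j == 1%N then p * (E 1%N + x) else E j)
    else if i == N.+1 then (if j == N then p * (E N + x) else E j)
    else if j == i.-1 then p * (E i.-1 + E i)
    else if j == i then (1 - p) * (E i.-1 + E i)
    else E j.

(* mean of the bath variable used by clock i (irrelevant for interior clocks) *)
Definition bath_mean {R : realType} (TL TR : R) (i : nat) : R :=
  if i == 1%N then TL else TR.

(* E_E[ f(E_{tau_1^+}) 1_{C_i(tau_1)} ] : with competing independent
   exponential clocks, clock i rings first with probability R_i / calR,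
   independently of the (uniform p, exponential X) randomness of the update. *)
Definition first_jump_expect {R : realType} (N : nat) (TL TR K : R)
  (f : (nat -> R) -> R) (E : nat -> R) (i : nat) : \bar R :=
  ((clock_rate N TL TR K E i / total_rate N TL TR K E)%:E *
   \int[@lebesgue_measure R]_(p in `]0%R, 1%R[%classic)
     \int[@lebesgue_measure R]_(x in `]0%R, +oo[%classic)
        (f (jump N i E p x) *
         (expR (- x / bath_mean TL TR i) / bath_mean TL TR i))%:E)%E.

Definition a_coef {R : realType} (N m : nat) : R :=
  1 - ((2 ^ m.-1)%:R - 1) / ((2 ^ N)%:R - 1).

Definition block_sum {R : realType} (E : nat -> R) (n k : nat) : R :=
  \sum_(0 <= j < n) E (k + j)%N.

Definition Vnk {R : realType} (N : nat) (eta : R) (n k : nat) (E : nat -> R) : R :=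
  powR (block_sum E n k) (a_coef N n * eta - 1).

(* Main.v *)
Require Import Defs.
Require Import Defs.
From HB Require Import structures.
From mathcomp Require Import all_boot all_order all_algebra.
From mathcomp Require Import all_classical all_reals all_analysis.
From mathcomp Require Import ring lra zify.
From mathcomp Require Import measurable_realfun exponential_distribution.
Import Order.TTheory GRing.Theory Num.Theory.
Import numFieldNormedType.Exports.
Local Open Scope classical_set_scope.
Local Open Scope ring_scope.
Lemma le_int_nm {R : realType} (D : set R) (f1 f2 : R -> \bar R) :
  (forall x, D x -> (0 <= f1 x)%E) -> (forall x, D x -> (f1 x <= f2 x)%E) ->
  (\int[@lebesgue_measure R]_(x in D) f1 x <= \int[@lebesgue_measure R]_(x in D) f2 x)%E.
Proof.
move=> f10 f12.
have f20 : forall x, D x -> (0 <= f2 x)%E by move=> x Dx; exact: le_trans (f10 x Dx) (f12 x Dx).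
rewrite ge0_integralE //; rewrite ge0_integralE //.
apply: ereal_sup_le => _ [h hf <-]; exists h => //= x.
apply: le_trans (hf x) _.
rewrite /patch; case: ifPn => // /set_mem; exact: f12.
Qed.
Lemma int01_le1 {R : realType} (f F : R -> R) :
  (forall x, 0 < x < 1 -> 0 <= f x) ->
  (forall x, 0 < x < 1 -> {for x, continuous f}) ->
  (forall x, 0 < x < 1 -> derivable F x 1) ->
  (forall x, 0 < x < 1 -> (F^`())%classic x = f x) ->
  (forall x, 0 < x < 1 -> 0 <= F x <= 1) ->
  (\int[@lebesgue_measure R]_(x in `]0%R, 1%R[) (f x)%:E <= 1)%E.
Proof.
move=> f0 cf dF dFf F01.
pose a (i : nat) : R := (i.+3%:R)^-1.
have a0 i : 0 < a i by rewrite /a invr_gt0 ltr0n.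
have a12 i : a i < 2^-1.
  rewrite /a ltf_pV2 ?posrE ?ltr0n// ltr_nat//.
have and i j : (i <= j)%N -> a j <= a i.
  by move=> ij; rewrite /a lef_pV2 ?posrE ?ltr0n// ler_nat ltnS ltnS ltnS.
pose D i := `[a i, 1 - a i]%classic.
have eqD : `]0, 1[%classic = \bigcup_i D i.
  apply/seteqP; split => x.
  - rewrite /= in_itv /= => /andP[x0 x1].
    pose m := Num.min x (1 - x).
    have m0 : 0 < m by rewrite /m lt_min x0 subr_gt0.
    exists (Num.truncn (m^-1)) => //.
    have : a (Num.truncn m^-1) < m.
      rewrite /a -[X in _ < X]invrK ltf_pV2 ?posrE ?ltr0n ?invr_gt0//.
      apply: lt_le_trans (truncnS_gt _) _.
      by rewrite ler_nat; apply: leq_trans (leqnSn _) (leqnSn _).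
    rewrite /D /= in_itv /= /m lt_min => /andP[h1 h2].
    apply/andP; split; first exact: ltW.
    by rewrite lerBrDl -lerBrDr ltW.
  - move=> [i _]; rewrite /D /= !in_itv /= => /andP[h1 h2].
    by move: (a0 i) => ?; apply/andP; split; lra.
have mD i : measurable (D i) by exact: measurable_itv.
have mf : measurable_fun (`]0%R, 1%R[%classic : set R) f.
  apply: open_continuous_measurable_fun; first exact: interval_open.
  by move=> x; rewrite inE /= in_itv /= => /andP[? ?]; apply: cf; apply/andP.
have Dsub i : D i `<=` `]0, 1[%classic by rewrite eqD; exact: bigcup_sup.
have ndD : {homo D : n m / (n <= m)%N >-> (n <= m)%O}.
  move=> i j ij; apply/subsetPset => x; rewrite /D /= !in_itv /= => /andP[h1 h2].
  by rewrite (le_trans (and _ _ ij) h1) /= (le_trans h2)// lerD2l lerN2 and.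
have mfD i : measurable_fun (D i) (EFin \o f).
  apply/measurable_EFinP; exact: measurable_funS mf.
have f0D i x : D i x -> (0 <= (EFin \o f) x)%E.
  move=> /Dsub; rewrite /= in_itv /= => /andP[? ?]; rewrite lee_fin; apply: f0; apply/andP; split => //.
have cvgI := ge0_nondecreasing_set_cvg_integral (mu:=@lebesgue_measure R) ndD mD mfD f0D.
rewrite eqD -(cvg_lim _ cvgI) //.
apply: lime_le.
  exact: (cvgP _ cvgI).
apply: nearW => i.
have ai1 : a i < 1 - a i by move: (a12 i); lra.
rewrite /= (@continuous_FTC2 _ f F) //.
* have h1 : 0 < a i < 1 by move: (a12 i) (a0 i); lra.
  have h2 : 0 < 1 - a i < 1 by move: (a12 i) (a0 i); lra.
  move: (F01 _ h1) (F01 _ h2) => /andP[? ?] /andP[? ?].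
  rewrite -EFinB lee_fin; lra.
* apply: continuous_in_subspaceT => x; rewrite inE /= in_itv /= => /andP[? ?].
  apply: cf; move: (a12 i) (a0 i); lra.
* split.
  - move=> x; rewrite in_itv /= => /andP[? ?]; apply: dF; move: (a12 i) (a0 i); lra.
  - apply: cvg_at_right_filter; apply: differentiable_continuous; apply/derivable1_diffP.
    apply: dF; move: (a12 i) (a0 i); lra.
  - apply: cvg_at_left_filter; apply: differentiable_continuous; apply/derivable1_diffP.
    apply: dF; move: (a12 i) (a0 i); lra.
* move=> x; rewrite in_itv /= => /andP[? ?]; apply: dFf; move: (a12 i) (a0 i); lra.
Qed.

Lemma powR_le1 {R : realType} (x b : R) : 0 <= x <= 1 -> 0 <= b -> x `^ b <= 1.
Proof.
move=> /andP[x0 x1] b0.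
have [->|xn0] := eqVneq x 0.
  by rewrite /powR eqxx; case: (b == 0).
rewrite -(powRr0 x); apply: ger_powR => //.
by rewrite x1 andbT lt_neqAle eq_sym xn0.
Qed.

Lemma cont_powR {R : realType} (b x : R) : 0 < x -> {for x, continuous (fun y : R => y `^ b)}.
Proof.
move=> x0; apply: differentiable_continuous; apply/derivable1_diffP.
by apply: derivable_powR; rewrite in_itv /= x0.
Qed.

Lemma intp_le1 {R : realType} (b : R) : 0 < b ->
  (\int[@lebesgue_measure R]_(x in `]0%R, 1%R[) (b * x `^ (b - 1))%:E <= 1)%E.
Proof.
move=> b0.
apply: (@int01_le1 _ _ (fun y => y `^ b)).
- by move=> x _; rewrite mulr_ge0 ?powR_ge0 ?ltW.
- move=> x /andP[x0 _].
  apply: (@continuousM _ R^o (fun=> b) (fun y => y `^ (b - 1))).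
    exact: cst_continuous.
  exact: cont_powR.
- by move=> x /andP[x0 _]; apply: derivable_powR; rewrite in_itv /= x0.
- by move=> x /andP[x0 _]; rewrite powR_derive1 // in_itv /= x0.
- move=> x /andP[x0 x1]; rewrite powR_ge0 /= powR_le1 ?ltW //.
Qed.

Lemma intq_le1 {R : realType} (b : R) : 0 < b ->
  (\int[@lebesgue_measure R]_(x in `]0%R, 1%R[) (b * (1 - x) `^ (b - 1))%:E <= 1)%E.
Proof.
move=> b0.
have hd (x : R) : x < 1 -> is_derive x 1 (fun y : R => 1 - (1 - y) `^ b) (b * (1 - x) `^ (b - 1)).
  move=> x1.
  have h1 : is_derive x (1:R) (fun y : R => 1 - y) (-1).
    rewrite -sub0r; apply: is_deriveB.
  have h2 : is_derive (1 - x) (1:R) (fun y : R => y `^ b) (b * (1 - x) `^ (b - 1)).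
    by apply: is_derive1_powR; rewrite subr_gt0.
  have h3 := @is_derive1_comp _ (fun y : R => y `^ b) (fun y : R => 1 - y) x _ _ h2 h1.
  have h4 : is_derive x (1:R) (cst (1:R) - ((fun y : R => y `^ b) \o (fun y : R => 1 - y)))
     (0 - b * (1 - x) `^ (b - 1) * -1) by apply: is_deriveB.
  have -> : (fun y : R => 1 - (1 - y) `^ b) = cst (1:R) - ((fun y : R => y `^ b) \o (fun y : R => 1 - y)).
    by apply/funext => y.
  by rewrite -[X in is_derive _ _ _ X](_ : 0 - b * (1 - x) `^ (b - 1) * -1 = _) //; ring.
apply: (@int01_le1 _ _ (fun y => 1 - (1 - y) `^ b)).
- by move=> x _; rewrite mulr_ge0 ?powR_ge0 ?ltW.
- move=> x /andP[x0 x1].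
  apply: (@continuousM _ R^o (fun=> b) (fun y => (1 - y) `^ (b - 1))).
    exact: cst_continuous.
  apply: (@continuous_comp _ _ _ (fun y : R => 1 - y) (fun y => y `^ (b - 1))).
    apply: (@continuousB _ R^o); [exact: cst_continuous | exact: cvg_id].
  by apply: cont_powR; rewrite subr_gt0.
- by move=> x /andP[_ x1]; case: (hd x x1).
- by move=> x /andP[_ x1]; rewrite derive1E; have := hd x x1; case.
- move=> x /andP[x0 x1].
  have h := @powR_le1 _ (1 - x) b.
  have h' : (1 - x) `^ b <= 1 by apply: h; [apply/andP; split; lra | exact: ltW].
  have h'' := powR_ge0 (1 - x) b.
  apply/andP; split; lra.
Qed.
Lemma int_dens {R : realType} (m c : R) : 0 < m -> 0 <= c ->
  (\int[@lebesgue_measure R]_(x in `]0%R, +oo[) (c * (expR (- x / m) / m))%:E <= c%:E)%E.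
Proof.
move=> m0 c0.
have mi0 : 0 <= m^-1 by rewrite invr_ge0 ltW.
rewrite (_ : (\int[@lebesgue_measure R]_(x in `]0%R, +oo[) (c * (expR (- x / m) / m))%:E)%E =
  (\int[@lebesgue_measure R]_(x in `]0%R, +oo[) (c%:E * (exponential_pdf (m^-1) x)%:E))%E); last first.
  apply: eq_integral => x; rewrite inE /= in_itv /= andbT => x0.
  rewrite exponential_pdfE ?ltW // -EFinM; congr EFin.
  by rewrite mulNr (mulrC x) (mulrC _ m^-1) mulNr.
rewrite ge0_integralZl_EFin //; last 2 first.
- by move=> x _; rewrite lee_fin exponential_pdf_ge0.
- apply/measurable_EFinP; apply: measurable_funTS; exact: measurable_exponential_pdf.
rewrite -[leRHS]mule1; apply: lee_wpmul2l; first by rewrite lee_fin.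
rewrite -(integral_exponential_pdf (rate:=m^-1)); last by rewrite invr_gt0.
apply: ge0_subset_integral => //.
- apply/measurable_EFinP; exact: measurable_exponential_pdf.
- by move=> x _; rewrite lee_fin exponential_pdf_ge0.
Qed.

Lemma intg_c {R : realType} (g : R -> R) (c : R) : 0 <= c ->
  (forall x, 0 < x < 1 -> {for x, continuous g}) ->
  (forall x, 0 < x < 1 -> 0 <= g x) ->
  (\int[@lebesgue_measure R]_(x in `]0%R, 1%R[) (g x)%:E <= 1)%E ->
  (\int[@lebesgue_measure R]_(x in `]0%R, 1%R[) (c * g x)%:E <= c%:E)%E.
Proof.
move=> c0 cg g0 I1.
have mf : measurable_fun (`]0%R, 1%R[%classic : set R) g.
  apply: open_continuous_measurable_fun; first exact: interval_open.
  by move=> x; rewrite inE /= in_itv /= => /andP[? ?]; apply: cg; apply/andP.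
rewrite (_ : (\int[@lebesgue_measure R]_(x in `]0%R, 1%R[) (c * g x)%:E)%E =
  (\int[@lebesgue_measure R]_(x in `]0%R, 1%R[) (c%:E * (g x)%:E))%E); last first.
  by apply: eq_integral => x _; rewrite EFinM.
rewrite ge0_integralZl_EFin //.
- by rewrite -[leRHS]mule1; apply: lee_wpmul2l; rewrite // lee_fin.
- exact/measurable_EFinP.
Qed.

Lemma powR_anti {R : realType} (x y e : R) : 0 < x -> x <= y -> e <= 0 -> y `^ e <= x `^ e.
Proof.
move=> x0 xy e0.
have y0 : 0 < y by exact: lt_le_trans xy.
rewrite /powR !gt_eqF // ler_expR; apply: ler_wnM2l => //.
by rewrite ler_ln // posrE.
Qed.

Lemma core {R : realType} (S b C r tot m : R) (q : R -> R) (blk : R -> R -> R) :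
  0 < S -> 0 < b -> b <= 1 -> b^-1 <= C -> 0 <= r -> r <= S `^ 2^-1 -> 0 <= tot -> 0 < m ->
  (forall p x, 0 < p < 1 -> 0 < x -> 0 < q p /\ q p * S <= blk p x) ->
  (forall c, 0 <= c -> (\int[@lebesgue_measure R]_(p in `]0%R, 1%R[) (c * (b * q p `^ (b - 1)))%:E <= c%:E)%E) ->
  ((r / tot)%:E *
   \int[@lebesgue_measure R]_(p in `]0%R, 1%R[)
     \int[@lebesgue_measure R]_(x in `]0%R, +oo[)
        (blk p x `^ (b - 1) * (expR (- x / m) / m))%:E
   <= (C / tot * S `^ (b - 2^-1))%:E)%E.
Proof.
move=> S0 b0 b1 bC r0 rS tot0 m0 hq hI.
pose c := S `^ (b - 1) / b.
have c0 : 0 <= c by rewrite /c divr_ge0 ?powR_ge0 ?ltW.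
have dens0 x : 0 <= expR (- x / m) / m by rewrite divr_ge0 ?expR_ge0 ?ltW.
have outer : (\int[@lebesgue_measure R]_(p in `]0%R, 1%R[)
     \int[@lebesgue_measure R]_(x in `]0%R, +oo[)
        (blk p x `^ (b - 1) * (expR (- x / m) / m))%:E <= c%:E)%E.
  apply: le_trans _ (hI c c0).
  apply: le_int_nm.
    move=> p _; apply: integral_ge0 => x _; rewrite lee_fin mulr_ge0 ?powR_ge0 //.
  move=> p; rewrite /= in_itv /= => /andP[p0 p1].
  have p01 : 0 < p < 1 by apply/andP.
  apply: (le_trans _ (@int_dens R m (c * (b * q p `^ (b - 1))) m0 _)); last first.
    by rewrite mulr_ge0 // mulr_ge0 ?powR_ge0 ?ltW.
  apply: le_int_nm.
    by move=> x _; rewrite lee_fin mulr_ge0 ?powR_ge0.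
  move=> x; rewrite /= in_itv /= andbT => x0.
  rewrite lee_fin; apply: ler_wpM2r => //.
  have [q0 qS] := hq p x p01 x0.
  rewrite /c mulrA divfK ?gt_eqF // -powRM; [rewrite mulrC|exact: ltW|exact: ltW].
  apply: powR_anti => //; first by rewrite mulr_gt0.
  by rewrite subr_le0.
apply: le_trans (lee_wpmul2l _ outer) _; first by rewrite lee_fin divr_ge0.
rewrite -EFinM lee_fin.
have -> : b - 2^-1 = (b - 1) + 2^-1 by rewrite -addrA (_ : -1 + 2^-1 = - 2^-1) //; lra.
rewrite powRD; last by apply/implyP => _; rewrite gt_eqF.
rewrite /c.
have e1 : r / tot * (S `^ (b - 1) / b) = (r * b^-1) * (S `^ (b - 1) * tot^-1) by ring.
have e2 : C / tot * (S `^ (b - 1) * S `^ 2^-1) = (S `^ 2^-1 * C) * (S `^ (b - 1) * tot^-1) by ring.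
rewrite e1 e2; apply: ler_wpM2r; first by rewrite mulr_ge0 ?powR_ge0 ?invr_ge0.
apply: ler_pM => //; by rewrite invr_ge0 ltW.
Qed.
Lemma block_ge {R : realType} (E E' : nat -> R) n k (q : R) :
  (forall j, (j < n)%N -> q * E (k + j)%N <= E' (k + j)%N) ->
  q * block_sum E n k <= block_sum E' n k.
Proof.
move=> h; rewrite /block_sum mulr_sumr; apply: ler_sum_nat => j /andP[_ jn]; exact: h.
Qed.

Lemma le_block {R : realType} (E : nat -> R) n k j0 :
  (forall j, (j < n)%N -> 0 <= E (k + j)%N) -> (j0 < n)%N -> E (k + j0)%N <= block_sum E n k.
Proof.
rewrite /block_sum; elim: n => [//|n IH] h j0n.
rewrite big_nat_recr //=.
have s0 : 0 <= \sum_(0 <= i < n) E (k + i)%N.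
  rewrite big_nat; apply: sumr_ge0 => i /andP[_ ?]; apply: h; lia.
have [jn|jn] := ltnP j0 n.
  rewrite -[leLHS]addr0; apply: lerD; last by apply: h.
  by apply: IH => // j ?; apply: h; lia.
have -> : j0 = n by lia.
by rewrite -[leLHS]add0r lerD2r.
Qed.

Lemma rate_le {R : realType} (K A B : R) : 0 <= K ->
  0 <= rateR K A B /\ rateR K A B <= Num.sqrt A /\ rateR K A B <= Num.sqrt B.
Proof.
move=> K0; rewrite /rateR; split; first by rewrite le_min K0 sqrtr_ge0.
split; (apply: le_trans (_ : _ <= Num.sqrt (Num.min A B)) _; first by rewrite ge_min lexx orbT);
  apply: ler_wsqrtr; by rewrite ge_min lexx ?orbT.
Qed.

Lemma a_bounds {R : realType} (N n : nat) : (1 <= n <= N)%N ->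
  2^-1 <= a_coef (R:=R) N n /\ a_coef (R:=R) N n <= 1.
Proof.
move=> /andP[n1 nN].
have hu : 1 <= (2 ^ n.-1)%:R :> R by rewrite ler1n expn_gt0.
have hv : 2 * (2 ^ n.-1)%:R <= (2 ^ N)%:R :> R.
  rewrite -natrM ler_nat -expnS prednK //; apply: leq_pexp2l => //.
have hv0 : 0 < (2 ^ N)%:R - 1 :> R by lra.
rewrite /a_coef; split.
  suff : ((2 ^ n.-1)%:R - 1) / ((2 ^ N)%:R - 1) <= 2^-1 :> R by lra.
  rewrite ler_pdivrMr //; lra.
suff : 0 <= ((2 ^ n.-1)%:R - 1) / ((2 ^ N)%:R - 1) :> R by lra.
by apply: divr_ge0; [rewrite subr_ge0 | exact: ltW].
Qed.

Lemma cont_gp {R : realType} (b x : R) : 0 < x -> {for x, continuous (fun y : R => b * y `^ (b - 1))}.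
Proof.
move=> x0.
apply: (@continuousM _ R^o (fun=> b) (fun y => y `^ (b - 1))).
  exact: cst_continuous.
exact: cont_powR.
Qed.

Lemma cont_gq {R : realType} (b x : R) : x < 1 -> {for x, continuous (fun y : R => b * (1 - y) `^ (b - 1))}.
Proof.
move=> x1.
apply: (@continuousM _ R^o (fun=> b) (fun y => (1 - y) `^ (b - 1))).
  exact: cst_continuous.
apply: (@continuous_comp _ _ _ (fun y : R => 1 - y) (fun y => y `^ (b - 1))).
  apply: (@continuousB _ R^o); [exact: cst_continuous | exact: cvg_id].
by apply: cont_powR; rewrite subr_gt0.
Qed.

Lemma hIp {R : realType} (b : R) : 0 < b -> forall c, 0 <= c ->
  (\int[@lebesgue_measure R]_(p in `]0%R, 1%R[) (c * (b * p `^ (b - 1)))%:E <= c%:E)%E.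
Proof.
move=> b0 c c0; apply: (@intg_c _ (fun p => b * p `^ (b - 1))) => //.
- by move=> x /andP[x0 _]; apply: cont_gp.
- by move=> x _; rewrite mulr_ge0 ?powR_ge0 ?ltW.
- exact: intp_le1.
Qed.

Lemma hIq {R : realType} (b : R) : 0 < b -> forall c, 0 <= c ->
  (\int[@lebesgue_measure R]_(p in `]0%R, 1%R[) (c * (b * (1 - p) `^ (b - 1)))%:E <= c%:E)%E.
Proof.
move=> b0 c c0; apply: (@intg_c _ (fun p => b * (1 - p) `^ (b - 1))) => //.
- by move=> x /andP[_ x1]; apply: cont_gq.
- by move=> x _; rewrite mulr_ge0 ?powR_ge0 ?ltW.
- exact: intq_le1.
Qed.

Lemma ext_in {R : realType} N (TL TR : R) E j : (1 <= j <= N)%N -> ext N TL TR E j = E j.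
Proof.
move=> /andP[j1 jN]; rewrite /ext.
have -> : (j == 0%N) = false by apply/eqP; lia.
by have -> : (j == N.+1) = false by apply/eqP; lia.
Qed.

Lemma core' {R : realType} N (TL TR K : R) (E : nat -> R) (eta C : R) n k i (q : R -> R) :
  0 < block_sum E n k -> 0 < a_coef N n * eta -> a_coef N n * eta <= 1 -> (a_coef N n * eta)^-1 <= C ->
  0 <= clock_rate N TL TR K E i -> clock_rate N TL TR K E i <= block_sum E n k `^ 2^-1 ->
  0 <= total_rate N TL TR K E -> 0 < bath_mean TL TR i ->
  (forall p x, 0 < p < 1 -> 0 < x -> 0 < q p /\ q p * block_sum E n k <= block_sum (jump N i E p x) n k) ->
  (forall c, 0 <= c -> (\int[@lebesgue_measure R]_(p in `]0%R, 1%R[)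
      (c * ((a_coef N n * eta) * q p `^ (a_coef N n * eta - 1)))%:E <= c%:E)%E) ->
  (first_jump_expect N TL TR K (Vnk N eta n k) E i <=
    (C / total_rate N TL TR K E * powR (block_sum E n k) (a_coef N n * eta - 2^-1))%:E)%E.
Proof.
move=> S0 b0 b1 bC r0 rS t0 m0 hq hI.
rewrite /first_jump_expect /Vnk.
exact: (@core R _ _ _ _ _ _ _ _ S0 b0 b1 bC r0 rS t0 m0 hq hI).
Qed.

Local Close Scope classical_set_scope.

Theorem lemma4p2 (R : realType) (N : nat) (hN : (1 <= N)%N) :
  exists eta0 : R, 0 < eta0 /\
  forall eta : R, 0 < eta -> eta < eta0 ->
  exists C : R, 0 < C /\
  forall TL TR : R, 0 < TL -> 0 < TR ->
  exists K0 : R, forall K : R, K0 <= K ->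
  forall (E : nat -> R), (forall j, (1 <= j <= N)%N -> 0 < E j) ->
  forall n k : nat, (1 <= n <= N)%N -> (1 <= k <= N - n + 1)%N ->
    (first_jump_expect N TL TR K (Vnk N eta n k) E k
       <= (C / total_rate N TL TR K E
           * powR (block_sum E n k) (a_coef N n * eta - 2^-1))%:E)%E /\
    (first_jump_expect N TL TR K (Vnk N eta n k) E (k + n)
       <= (C / total_rate N TL TR K E
           * powR (block_sum E n k) (a_coef N n * eta - 2^-1))%:E)%E.
Proof.
exists 1; split; first exact: ltr01.
move=> eta eta0 eta1.
exists (2 / eta); split; first by rewrite divr_gt0.
move=> TL TR TL0 TR0; exists 0 => K K0 E Epos n k /andP[n1 nN] /andP[k1 kN].
have [a1 a2] := @a_bounds R N n (introT andP (conj n1 nN)).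
pose b := a_coef N n * eta.
have b0 : 0 < b by rewrite /b mulr_gt0 //; lra.
have b1 : b <= 1 by rewrite /b; nra.
have bC : b^-1 <= 2 / eta.
  have hb : eta / 2 <= b by rewrite /b; nra.
  rewrite (_ : 2 / eta = (eta / 2)^-1); last by rewrite invf_div.
  by rewrite lef_pV2 ?posrE ?divr_gt0.
pose S := block_sum E n k.
have Eblk j : (j < n)%N -> 0 < E (k + j)%N by move=> jn; apply: Epos; clear -hN n1 nN k1 kN jn; lia.
have ES j : (j < n)%N -> E (k + j)%N <= S.
  by move=> jn; apply: le_block => // i ilt; apply: ltW; apply: Eblk.
have S0 : 0 < S by apply: lt_le_trans (Eblk 0%N n1) (ES 0%N n1).
have sqS : Num.sqrt S = S `^ 2^-1 by rewrite powR12_sqrt // ltW.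
have tot0 : 0 <= total_rate N TL TR K E.
  rewrite /total_rate big_nat; apply: sumr_ge0 => i _.
  by rewrite /clock_rate; case: (rate_le K (ext N TL TR E i.-1) (ext N TL TR E i) K0).
have m0 i : 0 < bath_mean TL TR i by rewrite /bath_mean; case: ifP.
have rS i j : (j < n)%N -> (ext N TL TR E i.-1 = E (k + j)%N \/ ext N TL TR E i = E (k + j)%N) ->
    0 <= clock_rate N TL TR K E i /\ clock_rate N TL TR K E i <= S `^ 2^-1.
  move=> jn hj; rewrite /clock_rate.
  have [r0 [rA rB]] := rate_le K (ext N TL TR E i.-1) (ext N TL TR E i) K0.
  split => //; rewrite -sqS.
  case: hj => h.
    by apply: le_trans rA _; rewrite h; apply: ler_wsqrtr; exact: ES.
  by apply: le_trans rB _; rewrite h; apply: ler_wsqrtr; exact: ES.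
split.
-   have [ke|kn1] := eqVneq k 1%N.
  + have hx : ext N TL TR E k = E (k + 0)%N by rewrite addn0 ext_in //; apply/andP; split; clear -hN n1 nN k1 kN; lia.
    have [r0 rle] := rS k 0%N n1 (or_intror hx).
    apply: (@core' _ _ _ _ _ _ _ _ _ _ _ id) => //.
    * move=> p x /andP[p0 p1] x0; split => //.
      apply: block_ge => j jn; rewrite /jump ke eqxx /=.
      case: (eqVneq (1 + j)%N 1%N) => [e|ne].
        rewrite e; apply: ler_wpM2l; first exact: ltW.
        by rewrite lerDl ltW.
      apply: ler_piMl; last exact: ltW.
      by apply: ltW; rewrite -ke; exact: Eblk.
    * exact: hIp.
  + have hx : ext N TL TR E k = E (k + 0)%N by rewrite addn0 ext_in //; apply/andP; split; clear -hN n1 nN k1 kN; lia.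
    have [r0 rle] := rS k 0%N n1 (or_intror hx).
    have kN1 : (k == N.+1) = false by apply/eqP; clear -hN n1 nN k1 kN; lia.
    apply: (@core' _ _ _ _ _ _ _ _ _ _ _ (fun p => 1 - p)) => //.
    * move=> p x /andP[p0 p1] x0; split; first by rewrite subr_gt0.
      apply: block_ge => j jn; rewrite /jump (negbTE kn1) kN1.
      have -> : (k + j == k.-1)%N = false by apply/eqP; clear -k1; lia.
      case: (eqVneq (k + j)%N k) => [e|ne].
        rewrite e; apply: ler_wpM2l; first by rewrite subr_ge0 ltW.
        by rewrite lerDr; apply: ltW; apply: Epos; clear -hN n1 nN k1 kN kn1; lia.
      apply: ler_piMl; first by apply: ltW; exact: Eblk.
      lra.
    * exact: hIq.
-   have kn1' : (k + n == 1)%N = false by apply/eqP; clear -n1 k1; lia.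
  have hx : ext N TL TR E (k + n).-1 = E (k + n.-1)%N.
    by rewrite ext_in; [congr E; clear -n1; lia | apply/andP; split; clear -hN n1 nN k1 kN; lia].
  have nn : (n.-1 < n)%N by clear -n1; lia.
  have [r0 rle] := rS (k + n)%N n.-1 nn (or_introl hx).
  apply: (@core' _ _ _ _ _ _ _ _ _ _ _ id) => //; last exact: hIp.
  move=> p x /andP[p0 p1] x0; split => //.
  apply: block_ge => j jn; rewrite /jump kn1' /=.
  case: (eqVneq (k + n)%N N.+1) => [kNe|kNn].
    case: (eqVneq (k + j)%N N) => [e|ne].
      rewrite e; apply: ler_wpM2l; first exact: ltW.
      by rewrite lerDl ltW.
    apply: ler_piMl; last exact: ltW.
    by apply: ltW; exact: Eblk.
  case: (eqVneq (k + j)%N (k + n).-1) => [e|ne].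
    rewrite e; apply: ler_wpM2l; first exact: ltW.
    by rewrite lerDl; apply: ltW; apply: Epos; clear -hN n1 nN k1 kN kNn; lia.
  have -> : (k + j == k + n)%N = false by apply/eqP; clear -jn; lia.
  apply: ler_piMl; last exact: ltW.
  by apply: ltW; exact: Eblk.
Qed.
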